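(* Let $V=\operatorname{span}(x_1,\dots,x_7)$, let $R=\operatorname{span}(r_1,\dots,r_7)\subset V\otimes V$, and let $W=\sum_{i,j,l}\varepsilon^{ijl}x_i\otimes x_j\otimes x_l\in V^{\otimes3}$. (1) The linear map $V^*\otimes V^*\to V$, $\lambda\otimes\mu\mapsto\sum_{i,j,l}\varepsilon^{ijl}x_i\lambda(x_j)\mu(x_l)$, determined by $W$ has rank $7$. (2) If $\mathbb{O}_k$ is a division algebra (for example $k=\mathbb{R}$), every nonzero element of $R$ has rank $6$. (3) If $k$ is algebraically closed of characteristic $\ne2$, every nonzero element of $R$ has rank $\ge4$, and rank exactly $4$ occurs.
   Context: Let $k$ be a field of characteristic $\ne 2$. Label the points of the Fano plane by $1,\dots,7$ so that its directed lines are $123,145,167,246,275,374,365$; for $i,j,l$ put $\varepsilon^{ijl}=1$ if $(i,j,l)$ is a cyclic rotation of a directed line, $-1$ if $(j,i,l)$ is, and $0$ otherwise. $r_i=\sum_{m,n}\varepsilon^{imn}x_m\otimes x_n$ are the defining relations of $A_k=T(V)/(R)$. The rank of an element of $V\otimes V$ is its rank as a $7\times7$ matrix of coefficients. $\mathbb{O}_k$ is the octonion algebra with basis $1,o_1,\dots,o_7$ and $o_ro_s=\sum_i\varepsilon^{rsi}o_i-\delta_{rs}$. *)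

(* Defs.v *)
From HB Require Import structures.
From mathcomp Require Import all_boot all_order all_algebra.
Set Implicit Arguments. Unset Strict Implicit. Unset Printing Implicit Defensive.
Import Order.TTheory GRing.Theory Num.Theory.
Local Open Scope ring_scope.

(* Points 1..7 of the Fano plane are represented by 0..6 (ordinals 'I_7). *)
(* Directed lines 123,145,167,246,275,374,365, shifted down by one.       *)
Definition fano_lines : seq (nat * nat * nat) :=
  [:: (0,1,2); (0,3,4); (0,5,6); (1,3,5); (1,6,4); (2,6,3); (2,5,4)]%N.

Definition is_rot (i j l : nat) : bool :=
  has (fun t : nat * nat * nat =>
         let '(a, b, c) := t in
         [|| (i, j, l) == (a, b, c), (i, j, l) == (b, c, a) | (i, j, l) == (c, a, b)])
      fano_lines.

Definition eps_int (i j l : nat) : int :=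
  if is_rot i j l then 1 else if is_rot j i l then -1 else 0.

Definition eps (k : fieldType) (i j l : 'I_7) : k := (eps_int i j l)%:~R.

(* Coefficient matrix of r_i = sum_{m,n} eps^{imn} x_m (x) x_n *)
Definition rmx (k : fieldType) (i : 'I_7) : 'M[k]_7 :=
  \matrix_(m < 7, n < 7) eps k i m n.

(* Coefficient matrix of the element sum_i a_i r_i of R = span(r_1..r_7) *)
Definition Relt (k : fieldType) (a : 'rV[k]_7) : 'M[k]_7 :=
  \sum_(i < 7) a 0 i *: rmx k i.

(* Matrix (7 x 49) of the linear map V^* (x) V^* -> V determined by W:
   coordinate i of the image of lambda (x) mu is sum_{j,l} eps^{ijl} lambda_j mu_l,
   i.e. row i is the flattening (mxvec) of the coefficient matrix (eps^{ijl})_{j,l}. *)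
Definition Wmap (k : fieldType) : 'M[k]_(7, 7 * 7) :=
  \matrix_(i < 7) mxvec (rmx k i).

(* Octonions O_k: a0 * 1 + sum_r a_r o_r, represented as (a0, (a_r)_r). *)
Definition oct (k : fieldType) := (k * 'rV[k]_7)%type.

(* o_r o_s = sum_i eps^{rsi} o_i - delta_{rs} *)
Definition octmul (k : fieldType) (x y : oct k) : oct k :=
  (x.1 * y.1 - \sum_(r < 7) x.2 0 r * y.2 0 r,
   \row_(i < 7) (x.1 * y.2 0 i + y.1 * x.2 0 i
                 + \sum_(r < 7) \sum_(s < 7) eps k r s i * x.2 0 r * y.2 0 s)).

Definition oct_division (k : fieldType) : Prop :=
  forall a : oct k, a != (0, 0) ->
    forall b : oct k,
      (exists! x : oct k, octmul a x = b) /\ (exists! y : oct k, octmul y a = b).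

(* Main.v *)
Require Import Defs.
From HB Require Import structures.
From mathcomp Require Import all_boot all_order all_algebra.
From mathcomp Require Import ring zify.
Import Order.TTheory GRing.Theory Num.Theory.
Local Open Scope ring_scope.

Definition o0 : 'I_7 := @Ordinal 7 0 isT.
Definition o1 : 'I_7 := @Ordinal 7 1 isT.
Definition o2 : 'I_7 := @Ordinal 7 2 isT.
Definition o3 : 'I_7 := @Ordinal 7 3 isT.
Definition o4 : 'I_7 := @Ordinal 7 4 isT.
Definition o5 : 'I_7 := @Ordinal 7 5 isT.
Definition o6 : 'I_7 := @Ordinal 7 6 isT.

Lemma ord7P (P : 'I_7 -> Prop) : P o0 -> P o1 -> P o2 -> P o3 -> P o4 -> P o5 -> P o6 -> forall i, P i.
Proof.
move=> H0 H1 H2 H3 H4 H5 H6 [m Hm].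
do 7 (case: m Hm => [|m] Hm; first by rewrite (eq_irrelevance Hm isT)).
by [].
Qed.

Lemma sum7 (R : nmodType) (F : 'I_7 -> R) :
  \sum_(i < 7) F i = F o0 + F o1 + F o2 + F o3 + F o4 + F o5 + F o6.
Proof.
rewrite !big_ord_recl big_ord0 addr0 !addrA.
by do !(congr (_ + _)); congr F; apply/val_inj.
Qed.

Lemma eps_skew (k : fieldType) (i p q : 'I_7) : eps k i q p = - eps k i p q.
Proof.
rewrite /eps -mulrNz; congr (_ *~ _).
by elim/ord7P: i; elim/ord7P: p; elim/ord7P: q.
Qed.

Lemma eps_diag (k : fieldType) (i p : 'I_7) : eps k i p p = 0.
Proof.
rewrite /eps (_ : eps_int i p p = 0) //.
by elim/ord7P: i; elim/ord7P: p.
Qed.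

Lemma ReltE (k : fieldType) (a : 'rV[k]_7) p q :
  Relt a p q = \sum_(i < 7) a 0 i * eps k i p q.
Proof. by rewrite /Relt summxE; apply: eq_bigr => i _; rewrite !mxE. Qed.

Lemma Relt_skew (k : fieldType) (a : 'rV[k]_7) p q : Relt a q p = - Relt a p q.
Proof. rewrite !ReltE -sumrN; apply: eq_bigr => i _; by rewrite eps_skew mulrN. Qed.

Lemma Relt_diag (k : fieldType) (a : 'rV[k]_7) p : Relt a p p = 0.
Proof. rewrite ReltE big1 // => i _; by rewrite eps_diag mulr0. Qed.

Definition pf {k : fieldType} (M : 'M[k]_7) (p q r s : 'I_7) : k :=
  M p q * M r s - M p r * M q s + M p s * M q r.

Lemma pf_rank (k : fieldType) (M : 'M[k]_7) p q r s :
  (forall i j, M j i = - M i j) -> (forall i, M i i = 0) ->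
  (\rank M < 4)%N -> pf M p q r s = 0.
Proof.
move=> sk dg rk; apply/eqP; apply: contraLR rk => nz; rewrite -leqNgt.
pose f (i : 'I_4) := nth p [:: p; q; r; s] i.
pose S := rowsub f (colsub f M).
have rS : (\rank S <= \rank M)%N.
  rewrite /S rowsubE (leq_trans (mxrankM_maxr _ _)) //.
  have -> : colsub f M = M *m colsub f 1%:M by rewrite mulmx_colsub mulmx1.
  exact: mxrankM_maxl.
pose T : 'M[k]_4 := \matrix_(i, j)
  match nat_of_ord i, nat_of_ord j with
  | 0, 1 => - M r s | 0, 2 => M q s | 0, 3 => - M q r
  | 1, 0 => M r s | 1, 2 => - M p s | 1, 3 => M p r
  | 2, 0 => - M q s | 2, 1 => M p s | 2, 3 => - M p q
  | 3, 0 => M q r | 3, 1 => - M p r | 3, 2 => M p q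
  | _, _ => 0 end.
have ST : S *m T = pf M p q r s *: 1%:M.
  apply/matrixP => i j; rewrite !mxE !big_ord_recl big_ord0 !mxE /f.
  case: i => [[|[|[|[|i]]]] Hi] //=; case: j => [[|[|[|[|j]]]] Hj] //=;
  rewrite ?(dg p) ?(dg q) ?(dg r) ?(dg s) ?(sk p q) ?(sk p r) ?(sk p s) ?(sk q r) ?(sk q s) ?(sk r s);
  rewrite /pf; ring.
apply: leq_trans rS; apply: leq_trans (mxrankM_maxl S T).
by rewrite ST mxrank_scale_nz // mxrank1.
Qed.

Lemma Relt_rank4 (k : fieldType) (H2 : (2%:R : k) != 0) (a : 'rV[k]_7) :
  a != 0 -> (4 <= \rank (Relt a))%N.
Proof.
move=> anz; rewrite leqNgt; apply: contra anz => rk.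
have Hpf : forall p q r s, pf (Relt a) p q r s = 0.
  move=> p q r s; apply: pf_rank => //; [exact: Relt_skew | exact: Relt_diag].
  have E0 : ((-2)%:~R : k) * a 0 o0 ^+ 3 = (-1)%:~R * a 0 o4 * pf (Relt a) o0 o1 o2 o3 + (1)%:~R * a 0 o3 * pf (Relt a) o0 o1 o2 o4 + (1)%:~R * a 0 o6 * pf (Relt a) o0 o1 o2 o5 + (-1)%:~R * a 0 o5 * pf (Relt a) o0 o1 o2 o6 + (-1)%:~R * a 0 o2 * pf (Relt a) o0 o1 o3 o4 + (1)%:~R * a 0 o2 * pf (Relt a) o0 o1 o5 o6 + (2)%:~R * a 0 o1 * pf (Relt a) o0 o2 o3 o4 + (-1)%:~R * a 0 o0 * pf (Relt a) o0 o2 o3 o5 + (1)%:~R * a 0 o0 * pf (Relt a) o0 o2 o4 o6 + (-2)%:~R * a 0 o0 * pf (Relt a) o1 o2 o3 o4.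
    by rewrite /pf !ReltE !sum7 /eps /eps_int /is_rot /=; ring.
  have E1 : ((2)%:~R : k) * a 0 o1 ^+ 3 = (1)%:~R * a 0 o2 * pf (Relt a) o0 o1 o3 o5 + (1)%:~R * a 0 o1 * pf (Relt a) o0 o1 o3 o6 + (1)%:~R * a 0 o1 * pf (Relt a) o0 o1 o4 o5 + (-1)%:~R * a 0 o2 * pf (Relt a) o0 o1 o4 o6 + (-1)%:~R * a 0 o1 * pf (Relt a) o0 o2 o3 o5 + (1)%:~R * a 0 o1 * pf (Relt a) o0 o2 o4 o6.
    by rewrite /pf !ReltE !sum7 /eps /eps_int /is_rot /=; ring.
  have E2 : ((-2)%:~R : k) * a 0 o2 ^+ 3 = (-2)%:~R * a 0 o6 * pf (Relt a) o0 o1 o2 o3 + (2)%:~R * a 0 o4 * pf (Relt a) o0 o1 o2 o5 + (2)%:~R * a 0 o3 * pf (Relt a) o0 o1 o2 o6 + (-1)%:~R * a 0 o0 * pf (Relt a) o0 o1 o3 o4 + (-1)%:~R * a 0 o1 * pf (Relt a) o0 o1 o3 o5 + (2)%:~R * a 0 o2 * pf (Relt a) o0 o1 o4 o5 + (1)%:~R * a 0 o1 * pf (Relt a) o0 o1 o4 o6 + (1)%:~R * a 0 o0 * pf (Relt a) o0 o1 o5 o6 + (2)%:~R * a 0 o1 * pf (Relt a) o0 o2 o3 o6 + (2)%:~R * a 0 o4 * pf (Relt a) o0 o3 o4 o5.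
    by rewrite /pf !ReltE !sum7 /eps /eps_int /is_rot /=; ring.
  have E3 : ((2)%:~R : k) * a 0 o3 ^+ 3 = (-1)%:~R * a 0 o1 * pf (Relt a) o0 o1 o2 o5 + (-2)%:~R * a 0 o2 * pf (Relt a) o0 o1 o2 o6 + (-1)%:~R * a 0 o5 * pf (Relt a) o0 o1 o3 o4 + (1)%:~R * a 0 o4 * pf (Relt a) o0 o1 o3 o5 + (-2)%:~R * a 0 o3 * pf (Relt a) o0 o1 o4 o5 + (-1)%:~R * a 0 o5 * pf (Relt a) o0 o1 o5 o6 + (-1)%:~R * a 0 o6 * pf (Relt a) o0 o2 o3 o4 + (1)%:~R * a 0 o3 * pf (Relt a) o0 o2 o3 o5 + (1)%:~R * a 0 o4 * pf (Relt a) o0 o2 o3 o6 + (1)%:~R * a 0 o4 * pf (Relt a) o0 o2 o4 o5.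
    by rewrite /pf !ReltE !sum7 /eps /eps_int /is_rot /=; ring.
  have E4 : ((-2)%:~R : k) * a 0 o4 ^+ 3 = (1)%:~R * a 0 o2 * pf (Relt a) o0 o1 o2 o5 + (-1)%:~R * a 0 o1 * pf (Relt a) o0 o1 o2 o6 + (-1)%:~R * a 0 o6 * pf (Relt a) o0 o1 o3 o4 + (2)%:~R * a 0 o4 * pf (Relt a) o0 o1 o3 o6 + (-1)%:~R * a 0 o4 * pf (Relt a) o0 o1 o4 o5 + (-2)%:~R * a 0 o3 * pf (Relt a) o0 o1 o4 o6 + (1)%:~R * a 0 o5 * pf (Relt a) o0 o2 o3 o4 + (1)%:~R * a 0 o4 * pf (Relt a) o0 o2 o4 o6.
    by rewrite /pf !ReltE !sum7 /eps /eps_int /is_rot /=; ring.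
  have E5 : ((-2)%:~R : k) * a 0 o5 ^+ 3 = (3)%:~R * a 0 o1 * pf (Relt a) o0 o1 o2 o3 + (-1)%:~R * a 0 o2 * pf (Relt a) o0 o1 o2 o4 + (-2)%:~R * a 0 o3 * pf (Relt a) o0 o1 o3 o4 + (2)%:~R * a 0 o6 * pf (Relt a) o0 o1 o3 o5 + (1)%:~R * a 0 o5 * pf (Relt a) o0 o1 o4 o5 + (1)%:~R * a 0 o3 * pf (Relt a) o0 o1 o5 o6 + (2)%:~R * a 0 o4 * pf (Relt a) o0 o2 o3 o4 + (1)%:~R * a 0 o5 * pf (Relt a) o0 o2 o3 o5 + (-2)%:~R * a 0 o5 * pf (Relt a) o0 o2 o4 o6 + (1)%:~R * a 0 o4 * pf (Relt a) o0 o2 o5 o6.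
    by rewrite /pf !ReltE !sum7 /eps /eps_int /is_rot /=; ring.
  have E6 : ((-2)%:~R : k) * a 0 o6 ^+ 3 = (-1)%:~R * a 0 o1 * pf (Relt a) o0 o1 o2 o4 + (-1)%:~R * a 0 o5 * pf (Relt a) o0 o1 o3 o5 + (-1)%:~R * a 0 o6 * pf (Relt a) o0 o1 o3 o6 + (1)%:~R * a 0 o6 * pf (Relt a) o0 o1 o4 o5 + (1)%:~R * a 0 o3 * pf (Relt a) o0 o2 o3 o4 + (1)%:~R * a 0 o6 * pf (Relt a) o0 o2 o3 o5.
    by rewrite /pf !ReltE !sum7 /eps /eps_int /is_rot /=; ring.
  have cube : forall c (x : k), c != 0 -> c * x ^+ 3 = 0 -> x = 0.
    by move=> c x cnz /eqP; rewrite mulf_eq0 (negbTE cnz) /= expf_eq0 /= => /eqP.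
  have n2 : ((-2)%:~R : k) != 0 by rewrite mulrNz oppr_eq0.
  have p2 : ((2)%:~R : k) != 0 by [].
  rewrite !Hpf ?mulr0 ?addr0 in E0 E1 E2 E3 E4 E5 E6.
  apply/eqP/rowP; elim/ord7P; rewrite !mxE;
  [exact: cube n2 E0|exact: cube p2 E1|exact: cube n2 E2|exact: cube p2 E3|exact: cube n2 E4|exact: cube n2 E5|exact: cube n2 E6].
Qed.
Definition dot {k : fieldType} (a : 'rV[k]_7) := \sum_(i < 7) a 0 i ^+ 2.

Lemma Msq (k : fieldType) (a : 'rV[k]_7) :
  Relt a *m Relt a = a^T *m a - dot a *: 1%:M.
Proof.
apply/matrixP; elim/ord7P; elim/ord7P;
rewrite !mxE sum7 big_ord1 !mxE !ReltE /dot !sum7 /eps /eps_int /is_rot /=; ring.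
Qed.

Lemma aM0 (k : fieldType) (a : 'rV[k]_7) : a *m Relt a = 0.
Proof.
apply/rowP; elim/ord7P; rewrite !mxE sum7 !ReltE !sum7 /eps /eps_int /is_rot /=; ring.
Qed.

Lemma oct_cross0 (k : fieldType) (a : 'rV[k]_7) i :
  \sum_(r < 7) \sum_(s < 7) eps k r s i * a 0 r * a 0 s = 0.
Proof. elim/ord7P: i; rewrite !sum7 /eps /eps_int /is_rot /=; ring. Qed.

Lemma Wmap_rank (k : fieldType) : \rank (Wmap k) = 7%N.
Proof.
pose mj (j : 'I_7) := nth o0 [:: o1; o2; o0; o4; o0; o6; o0] j.
pose nj (j : 'I_7) := nth o0 [:: o2; o0; o1; o0; o3; o0; o5] j.
pose B : 'M[k]_(7 * 7, 7) := \matrix_(x, j) (x == mxvec_index (mj j) (nj j))%:R.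
have WB : Wmap k *m B = 1%:M.
  apply/matrixP => i j; rewrite !mxE (bigD1 (mxvec_index (mj j) (nj j))) //=.
  rewrite big1 ?addr0; last first.
    by move=> x /negbTE nx; rewrite !mxE nx mulr0.
  rewrite !mxE eqxx mulr1 mxvecE mxE.
  move: i j; elim/ord7P; elim/ord7P; rewrite /eps /eps_int /is_rot /=; by [].
apply/eqP; rewrite eqn_leq rank_leq_row /=.
by rewrite -{1}(mxrank1 k 7) -WB mxrankM_maxl.
Qed.

Lemma Relt0 (k : fieldType) : Relt (0 : 'rV[k]_7) = 0.
Proof. by rewrite /Relt big1 // => i _; rewrite mxE scale0r. Qed.

Lemma Relt_nz (k : fieldType) (a : 'rV[k]_7) : Relt a != 0 -> a != 0.
Proof. by apply: contraNneq => ->; rewrite Relt0. Qed.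

Lemma rank_le6 (k : fieldType) (a : 'rV[k]_7) : a != 0 -> (\rank (Relt a) <= 6)%N.
Proof.
move=> anz; rewrite leqNgt; apply: contra anz => r7.
have : row_free (Relt a) by rewrite /row_free eqn_leq rank_leq_row r7.
rewrite row_free_unit => U.
by rewrite -(mulmxK U a) aM0 mul0mx.
Qed.

Lemma rank_ge6 (k : fieldType) (a : 'rV[k]_7) : dot a != 0 -> (6 <= \rank (Relt a))%N.
Proof.
move=> dnz.
have E : dot a *: 1%:M = a^T *m a - Relt a *m Relt a by rewrite Msq opprB addrC subrK.
have : (7 <= \rank (a^T *m a) + \rank (Relt a *m Relt a))%N.
  rewrite -{1}(mxrank1 k 7) -(mxrank_scale_nz _ dnz) E.
  by rewrite (leq_trans (mxrank_add _ _)) // mxrank_opp.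
have r1 : (\rank (a^T *m a) <= 1)%N.
  exact: leq_trans (mxrankM_maxl _ _) (rank_leq_col _).
have r2 := mxrankM_maxl (Relt a) (Relt a).
move=> h; rewrite -ltnS; apply: leq_trans h _.
exact: leq_add r1 r2.
Qed.

Lemma mxE0 (k : fieldType) m n (i : 'I_m) (j : 'I_n) : (0 : 'M[k]_(m,n)) i j = 0.
Proof. by rewrite mxE. Qed.

Lemma div_dot (k : fieldType) (a : 'rV[k]_7) : oct_division k -> a != 0 -> dot a != 0.
Proof.
move=> D anz; apply/negP => /eqP d0.
have xnz : ((0 : k), a) != (0, 0) by rewrite xpair_eqE negb_and anz orbT.
have [[x0 [_ U]] _] := D _ xnz (0, 0).
have h1 : octmul (0, a) (0, 0) = (0, 0).
  rewrite /octmul /=; congr (_, _).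
    by rewrite mul0r big1 ?subr0 // => i _; rewrite mxE0 mulr0.
  apply/rowP => i; rewrite !mxE !mul0r !add0r big1 // => r _.
  by rewrite big1 // => s _; rewrite mxE0 mulr0.
have h2 : octmul (0, a) (0, a) = (0, 0).
  rewrite /octmul /=; congr (_, _).
    rewrite mul0r.
    have -> : \sum_(r < 7) a 0 r * a 0 r = dot a by apply: eq_bigr => r _; rewrite expr2.
    by rewrite d0 subr0.
  apply/rowP => i; rewrite !mxE !mul0r. by rewrite !add0r oct_cross0.
have e1 := U _ h1; have e2 := U _ h2.
have az : a = 0 by exact: (f_equal snd (etrans (esym e2) e1)).
by move: anz; rewrite az eqxx.
Qed.

Lemma exists_rank4 (k : closedFieldType) (H2 : (2%:R : k) != 0) :
  exists a : 'rV[k]_7, Relt a != 0 /\ \rank (Relt a) = 4%N.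
Proof.
have [i Hi] := imaginary_exists k.
pose a : 'rV[k]_7 := \row_j (nth 0 [:: 1; i; 0; 0; 0; 0; 0] j).
have anz : a != 0.
  apply/negP => /eqP/rowP/(_ o0); rewrite !mxE /= => /eqP; by rewrite oner_eq0.
have r4 := Relt_rank4 _ H2 _ anz.
have d0 : dot a = 0.
  by rewrite /dot sum7 !mxE /= Hi; ring.
have r1 : (\rank (Relt a *m Relt a) <= 1)%N.
  rewrite Msq d0 scale0r subr0.
  exact: leq_trans (mxrankM_maxl _ _) (rank_leq_col _).
have hk := mxrank_mul_ker (Relt a) (Relt a).
have hc : (\rank (Relt a :&: kermx (Relt a))%MS <= 7 - \rank (Relt a))%N.
  by rewrite -mxrank_ker mxrankS // capmxSr.
exists a; split.
  by apply/eqP => h; move: r4; rewrite h mxrank0.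
apply/eqP; rewrite eqn_leq r4 andbT.
have rl := rank_leq_row (Relt a).
lia.
Qed.

Theorem lemma11p1 :
  (forall k : fieldType, (2%:R : k) != 0 -> \rank (Wmap k) = 7%N) /\
  (forall k : fieldType, (2%:R : k) != 0 -> oct_division k ->
     forall a : 'rV[k]_7, Relt a != 0 -> \rank (Relt a) = 6%N) /\
  (forall k : closedFieldType, (2%:R : k) != 0 ->
     (forall a : 'rV[k]_7, Relt a != 0 -> (4 <= \rank (Relt a))%N) /\
     (exists a : 'rV[k]_7, Relt a != 0 /\ \rank (Relt a) = 4%N)).
Proof.
split; first by move=> k _; exact: Wmap_rank.
split.
  move=> k _ D a /Relt_nz anz; apply/eqP; rewrite eqn_leq rank_le6 //.
  by rewrite rank_ge6 // div_dot.
move=> k H2; split; last exact: exists_rank4.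
by move=> a /Relt_nz; exact: Relt_rank4.
Qed.
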